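(* If $\Gamma\vdash M$ is derivable in $\ell\Lambda_\infty$ and $M\to N$, then $\Gamma\vdash N$ is derivable in $\ell\Lambda_\infty$.
   Context: Preterms are possibly infinite trees generated (coinductively) by $M,N ::= x \mid MN \mid \lambda x.M \mid \lambda^{\downarrow}x.M \mid \lambda^{\uparrow}x.M \mid \downarrow M \mid \uparrow M$ ($\downarrow M$ an inductive box, $\uparrow M$ a coinductive box); $M[N/x]$ is capture-avoiding substitution (coinductively defined). A pattern is $x$, $\downarrow x$ or $\uparrow x$; an environment is a finite set of patterns, each variable in at most one pattern; a linear environment is a set of variables; $\downarrow\Theta=\{\downarrow y: y\in\Theta\}$, $\uparrow\Theta=\{\uparrow y: y\in\Theta\}$; commas denote disjoint unions. The system $\ell\Lambda_\infty$ has rules (with $\Theta,\Xi$ linear): (vl) $\downarrow\Theta,\uparrow\Xi,x\vdash x$; (vi) $\downarrow\Theta,\uparrow\Xi,\downarrow x\vdash x$; (vc) $\downarrow\Theta,\uparrow\Xi,\uparrow x\vdash x$; (a) from $\Gamma,\downarrow\Theta,\uparrow\Xi\vdash M$ and $\Delta,\downarrow\Theta,\uparrow\Xi\vdash N$ infer $\Gamma,\Delta,\downarrow\Theta,\uparrow\Xi\vdash MN$; (ll) from $\Gamma,x\vdash M$ infer $\Gamma\vdash\lambda x.M$; (li) from $\Gamma,\downarrow x\vdash M$ infer $\Gamma\vdash\lambda^\downarrow x.M$; (lc) from $\Gamma,\uparrow x\vdash M$ infer $\Gamma\vdash \lambda^\uparrow x.M$; (mi) from $\downarrow\Theta,\uparrow\Xi\vdash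 M$ infer $\downarrow\Theta,\uparrow\Xi\vdash \downarrow M$; (mc) from $\downarrow\Theta,\uparrow\Xi\vdash M$ infer $\downarrow\Theta,\uparrow\Xi\vdash\uparrow M$. (mc) is coinductive, the others inductive: derivable judgments are roots of possibly infinite derivation trees in which every infinite branch contains infinitely many (mc) instances. Basic reduction $\mapsto$: $(\lambda x.M)N\mapsto M[N/x]$, $(\lambda^\downarrow x.M)(\downarrow N)\mapsto M[N/x]$, $(\lambda^\uparrow x.M)(\uparrow N)\mapsto M[N/x]$. A context $C$ is a preterm with a single hole occurring at a finite position; $M\to N$ iff $M=C[L]$, $N=C[P]$ for some context $C$ and $L\mapsto P$. *)

(* Defs.v *)
From Stdlib Require Import Arith.

CoInductive term : Type :=
| Var  : nat -> term
| App  : term -> term -> term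
| Lam  : term -> term
| LamI : term -> term          (* lambda^{down} x. M   *)
| LamC : term -> term          (* lambda^{up} x. M     *)
| BoxI : term -> term          (* inductive box   (down M) *)
| BoxC : term -> term.         (* coinductive box (up M)   *)

(** Equality of infinite trees = bisimilarity. *)
CoInductive bisim : term -> term -> Prop :=
| bisim_Var  : forall x, bisim (Var x) (Var x)
| bisim_App  : forall M M' N N', bisim M M' -> bisim N N' -> bisim (App M N) (App M' N')
| bisim_Lam  : forall M M', bisim M M' -> bisim (Lam M) (Lam M')
| bisim_LamI : forall M M', bisim M M' -> bisim (LamI M) (LamI M')
| bisim_LamC : forall M M', bisim M M' -> bisim (LamC M) (LamC M')
| bisim_BoxI : forall M M', bisim M M' -> bisim (BoxI M) (BoxI M')
| bisim_BoxC : forall M M', bisim M M' -> bisim (BoxC M) (BoxC M').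

CoFixpoint rename (r : nat -> nat) (t : term) : term :=
  match t with
  | Var x => Var (r x)
  | App M N => App (rename r M) (rename r N)
  | Lam M => Lam (rename (fun n => match n with 0 => 0 | S k => S (r k) end) M)
  | LamI M => LamI (rename (fun n => match n with 0 => 0 | S k => S (r k) end) M)
  | LamC M => LamC (rename (fun n => match n with 0 => 0 | S k => S (r k) end) M)
  | BoxI M => BoxI (rename r M)
  | BoxC M => BoxC (rename r M)
  end.

Definition up (s : nat -> term) : nat -> term :=
  fun n => match n with 0 => Var 0 | S k => rename S (s k) end.

CoFixpoint subst (s : nat -> term) (t : term) : term :=
  match t with
  | Var x => s x
  | App M N => App (subst s M) (subst s N)
  | Lam M => Lam (subst (up s) M)
  | LamI M => LamI (subst (up s) M)
  | LamC M => LamC (subst (up s) M)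
  | BoxI M => BoxI (subst s M)
  | BoxC M => BoxC (subst s M)
  end.

Definition subst0 (N : term) (M : term) : term :=
  subst (fun n => match n with 0 => N | S k => Var k end) M.

Inductive basic_red : term -> term -> Prop :=
| br_lin : forall M N, basic_red (App (Lam M) N) (subst0 N M)
| br_ind : forall M N, basic_red (App (LamI M) (BoxI N)) (subst0 N M)
| br_coi : forall M N, basic_red (App (LamC M) (BoxC N)) (subst0 N M).

(** Closure under contexts with the hole at a finite position. *)
Inductive ctx_red : term -> term -> Prop :=
| cr_base : forall M N, basic_red M N -> ctx_red M N
| cr_appl : forall M M' N, ctx_red M M' -> ctx_red (App M N) (App M' N)
| cr_appr : forall M N N', ctx_red N N' -> ctx_red (App M N) (App M N')
| cr_lam  : forall M M', ctx_red M M' -> ctx_red (Lam M) (Lam M')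
| cr_lamI : forall M M', ctx_red M M' -> ctx_red (LamI M) (LamI M')
| cr_lamC : forall M M', ctx_red M M' -> ctx_red (LamC M) (LamC M')
| cr_boxI : forall M M', ctx_red M M' -> ctx_red (BoxI M) (BoxI M')
| cr_boxC : forall M M', ctx_red M M' -> ctx_red (BoxC M) (BoxC M').

Definition red (M N : term) : Prop := exists N', ctx_red M N' /\ bisim N' N.

(** Environments: de Bruijn index |-> pattern kind (x, down x, up x) or absent. *)
Inductive kind : Type := KL | KI | KC.

Definition env := nat -> option kind.

Definition finite_env (G : env) : Prop := exists n, forall k, n <= k -> G k = None.

(** the linear part of G is empty, i.e. G = down Theta, up Xi *)
Definition no_linear (G : env) : Prop := forall y, G y <> Some KL.

Definition ext (k : kind) (G : env) : env :=
  fun n => match n with 0 => Some k | S m => G m end.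

(** G = G1', G2', down Theta, up Xi  where G1 = G1', downTheta, upXi and
    G2 = G2', downTheta, upXi (disjoint unions). *)
Definition env_split (G G1 G2 : env) : Prop :=
  forall y,
    match G y with
    | None => G1 y = None /\ G2 y = None
    | Some KL => (G1 y = Some KL /\ G2 y = None) \/ (G1 y = None /\ G2 y = Some KL)
    | Some k => (G1 y = Some k /\ G2 y = Some k)
                \/ (G1 y = Some k /\ G2 y = None) \/ (G1 y = None /\ G2 y = Some k)
    end.

(** One layer: inductive rules, with the premise of (mc) referring to X. *)
Inductive derivF (X : env -> term -> Prop) : env -> term -> Prop :=
| d_vl : forall G x, G x = Some KL -> (forall y, y <> x -> G y <> Some KL) ->
         derivF X G (Var x)
| d_vi : forall G x, G x = Some KI -> no_linear G -> derivF X G (Var x)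
| d_vc : forall G x, G x = Some KC -> no_linear G -> derivF X G (Var x)
| d_a  : forall G G1 G2 M N, env_split G G1 G2 ->
         derivF X G1 M -> derivF X G2 N -> derivF X G (App M N)
| d_ll : forall G M, derivF X (ext KL G) M -> derivF X G (Lam M)
| d_li : forall G M, derivF X (ext KI G) M -> derivF X G (LamI M)
| d_lc : forall G M, derivF X (ext KC G) M -> derivF X G (LamC M)
| d_mi : forall G M, no_linear G -> derivF X G M -> derivF X G (BoxI M)
| d_mc : forall G M, no_linear G -> X G M -> derivF X G (BoxC M).

(** Derivability: greatest fixed point (in X) of the least fixed point derivF X.
    Equivalently: roots of possibly infinite derivation trees in which every
    infinite branch contains infinitely many (mc) instances. *)
Definition derivable (G : env) (M : term) : Prop :=
  exists X : env -> term -> Prop,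
    (forall G' M', X G' M' -> derivF X G' M') /\ X G M.

(* Main.v *)
Require Import Defs.
From Stdlib Require Import Arith Classical ClassicalEpsilon.

Definition postfix (X : env -> term -> Prop) := forall G t, X G t -> derivF X G t.

Lemma derivF_mono (X Y : env -> term -> Prop) :
  (forall G t, X G t -> Y G t) -> forall G t, derivF X G t -> derivF Y G t.
Proof.
  intros HXY G t H; induction H.
  - eapply d_vl; eauto.
  - eapply d_vi; eauto.
  - eapply d_vc; eauto.
  - eapply d_a; eauto.
  - eapply d_ll; eauto.
  - eapply d_li; eauto.
  - eapply d_lc; eauto.
  - eapply d_mi; eauto.
  - eapply d_mc; eauto.
Qed.

Lemma coind (X : env -> term -> Prop) : postfix X -> forall G t, X G t -> derivable G t.
Proof. intros HX G t H; exists X; auto. Qed.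

Lemma der_unfold G t : derivable G t -> derivF derivable G t.
Proof.
  intros [X [HX Ht]]. apply (derivF_mono X); auto.
  intros G' t' H'; exists X; auto.
Qed.

Lemma der_fold G t : derivF derivable G t -> derivable G t.
Proof.
  intros H. exists (derivF derivable). split; auto.
  intros G' t' H'. eapply derivF_mono; [|exact H']. apply der_unfold.
Qed.

Definition frob (t : term) : term :=
  match t with
  | Var x => Var x | App a b => App a b | Lam a => Lam a | LamI a => LamI a
  | LamC a => LamC a | BoxI a => BoxI a | BoxC a => BoxC a end.
Lemma frob_eq t : t = frob t. Proof. destruct t; reflexivity. Qed.

Lemma bisim_step : forall G t, derivF derivable G t -> forall t', bisim t t' ->
  derivF (fun G t' => exists t, derivable G t /\ bisim t t') G t'.
Proof.
  intros G t H; induction H; intros t' Hb; inversion Hb; subst.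
  - eapply d_vl; eauto.
  - eapply d_vi; eauto.
  - eapply d_vc; eauto.
  - eapply d_a; eauto.
  - eapply d_ll; eauto.
  - eapply d_li; eauto.
  - eapply d_lc; eauto.
  - eapply d_mi; eauto.
  - eapply d_mc; eauto.
Qed.

Lemma der_bisim G t t' : derivable G t -> bisim t t' -> derivable G t'.
Proof.
  intros H Hb. apply coind with (X := fun G t' => exists t, derivable G t /\ bisim t t').
  - intros G0 t0 [t1 [Hd Hb1]]. eapply bisim_step; eauto. apply der_unfold; auto.
  - eauto.
Qed.

Lemma split_sub1 G G1 G2 z k : env_split G G1 G2 -> G1 z = Some k -> G z = Some k.
Proof.
  intros Hs H; specialize (Hs z); destruct (G z) as [[| |]|]; destruct k;
  intuition congruence.
Qed.
Lemma split_sub2 G G1 G2 z k : env_split G G1 G2 -> G2 z = Some k -> G z = Some k.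
Proof.
  intros Hs H; specialize (Hs z); destruct (G z) as [[| |]|]; destruct k;
  intuition congruence.
Qed.
Lemma split_disj G G1 G2 z : env_split G G1 G2 -> G1 z = Some KL -> G2 z = Some KL -> False.
Proof.
  intros Hs H1 H2; specialize (Hs z); destruct (G z) as [[| |]|];
  intuition congruence.
Qed.
Lemma split_lin G G1 G2 z : env_split G G1 G2 -> G z = Some KL -> G1 z = Some KL \/ G2 z = Some KL.
Proof. intros Hs H; specialize (Hs z); rewrite H in Hs; intuition. Qed.

Definition Wk (E D : env) :=
  (forall z k, E z = Some k -> D z = Some k) /\ (forall z, D z = Some KL -> E z = Some KL).

Definition wsplit (E D E1 : env) : env :=
  fun z => match E z with None => D z | Some _ => E1 z end.

Lemma wk_nolin E D : Wk E D -> no_linear E -> no_linear D.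
Proof. intros [_ H] Hn y Hy. apply (Hn y); auto. Qed.

Lemma wk_ext k E D : Wk E D -> Wk (ext k E) (ext k D).
Proof.
  intros [H1 H2]; split; intros [|z]; simpl; eauto.
Qed.

Lemma wk_step : forall E t, derivF derivable E t -> forall D, Wk E D ->
  derivF (fun D t => exists E, derivable E t /\ Wk E D) D t.
Proof.
  intros E t H; induction H; intros D HW.
  - apply d_vl. apply (proj1 HW); auto.
    intros y Hy HD. apply (H0 y Hy). apply (proj2 HW); auto.
  - apply d_vi. apply (proj1 HW); auto. eapply wk_nolin; eauto.
  - apply d_vc. apply (proj1 HW); auto. eapply wk_nolin; eauto.
  - destruct HW as [W1 W2].
    apply d_a with (wsplit G D G1) (wsplit G D G2).
    + intros y. unfold wsplit. specialize (H y).
      destruct (G y) as [k|] eqn:He.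
      * rewrite (W1 y k He). destruct k; exact H.
      * destruct (D y) as [[| |]|] eqn:HD; auto.
        specialize (W2 y HD); congruence.
    + apply IHderivF1. split.
      * intros z k Hz. unfold wsplit. rewrite (split_sub1 _ _ _ _ _ H Hz). auto.
      * intros z Hz. unfold wsplit in Hz. destruct (G z) eqn:He; auto.
        specialize (W2 z Hz); congruence.
    + apply IHderivF2. split.
      * intros z k Hz. unfold wsplit. rewrite (split_sub2 _ _ _ _ _ H Hz). auto.
      * intros z Hz. unfold wsplit in Hz. destruct (G z) eqn:He; auto.
        specialize (W2 z Hz); congruence.
  - apply d_ll. apply IHderivF. apply wk_ext; auto.
  - apply d_li. apply IHderivF. apply wk_ext; auto.
  - apply d_lc. apply IHderivF. apply wk_ext; auto.
  - apply d_mi. eapply wk_nolin; eauto. auto.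
  - apply d_mc. eapply wk_nolin; eauto. eauto.
Qed.

Lemma der_wk E D t : derivable E t -> Wk E D -> derivable D t.
Proof.
  intros H HW. apply coind with (X := fun D t => exists E, derivable E t /\ Wk E D).
  - intros D0 t0 [E0 [Hd HW0]]. eapply wk_step; eauto. apply der_unfold; auto.
  - eauto.
Qed.

Definition lift (r : nat -> nat) : nat -> nat :=
  fun n => match n with 0 => 0 | S k => S (r k) end.

Lemma rename_var r x : rename r (Var x) = Var (r x).
Proof. rewrite (frob_eq (rename r (Var x))). reflexivity. Qed.
Lemma rename_app r M N : rename r (App M N) = App (rename r M) (rename r N).
Proof. rewrite (frob_eq (rename r (App M N))). reflexivity. Qed.
Lemma rename_lam r M : rename r (Lam M) = Lam (rename (lift r) M).
Proof. rewrite (frob_eq (rename r (Lam M))). reflexivity. Qed.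
Lemma rename_lamI r M : rename r (LamI M) = LamI (rename (lift r) M).
Proof. rewrite (frob_eq (rename r (LamI M))). reflexivity. Qed.
Lemma rename_lamC r M : rename r (LamC M) = LamC (rename (lift r) M).
Proof. rewrite (frob_eq (rename r (LamC M))). reflexivity. Qed.
Lemma rename_boxI r M : rename r (BoxI M) = BoxI (rename r M).
Proof. rewrite (frob_eq (rename r (BoxI M))). reflexivity. Qed.
Lemma rename_boxC r M : rename r (BoxC M) = BoxC (rename r M).
Proof. rewrite (frob_eq (rename r (BoxC M))). reflexivity. Qed.

Definition Ren (E E' : env) (r : nat -> nat) :=
  (forall a b, r a = r b -> a = b) /\ (forall n, E' (r n) = E n) /\
  (forall m, E' m <> None -> exists n, r n = m).

Definition pb (r : nat -> nat) (E1 : env) : env :=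
  fun m => match excluded_middle_informative (exists n, r n = m) with
           | left H => E1 (proj1_sig (constructive_indefinite_description _ H))
           | right _ => None end.

Lemma pb_at r E1 n : (forall a b, r a = r b -> a = b) -> pb r E1 (r n) = E1 n.
Proof.
  intros Hi. unfold pb. destruct (excluded_middle_informative _) as [H|H].
  - destruct (constructive_indefinite_description _ H) as [n' Hn']; simpl.
    rewrite (Hi _ _ Hn'); auto.
  - exfalso; apply H; eauto.
Qed.

Lemma pb_out r E1 m : ~ (exists n, r n = m) -> pb r E1 m = None.
Proof.
  intros Hn. unfold pb. destruct (excluded_middle_informative _) as [H|H]; auto.
  contradiction.
Qed.

Lemma ren_nolin E E' r : Ren E E' r -> no_linear E -> no_linear E'.
Proof.
  intros [Hi [Ha Hr]] Hn y Hy. destruct (Hr y) as [n Hn']; [congruence|].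
  subst. rewrite Ha in Hy. apply (Hn n Hy).
Qed.

Lemma ren_ext k E E' r : Ren E E' r -> Ren (ext k E) (ext k E') (lift r).
Proof.
  intros [Hi [Ha Hr]]; split; [|split].
  - intros [|a] [|b]; unfold lift; intros H; try discriminate; try reflexivity.
    injection H; intros Hab. rewrite (Hi _ _ Hab); auto.
  - intros [|n]; simpl; auto.
  - intros [|m]; simpl; intros H.
    + exists 0; auto.
    + destruct (Hr m H) as [n Hn]. exists (S n); simpl; congruence.
Qed.

Lemma ren_split E E1 E2 E' r : Ren E E' r -> env_split E E1 E2 ->
  env_split E' (pb r E1) (pb r E2).
Proof.
  intros [Hi [Ha Hr]] Hs m.
  destruct (classic (exists n, r n = m)) as [[n Hn]|Hn].
  - subst. rewrite Ha, !pb_at; auto. apply Hs.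
  - rewrite !pb_out; auto.
    destruct (E' m) eqn:He; auto.
    destruct (Hr m) as [n Hn']; [congruence|]. exfalso; eauto.
Qed.

Lemma ren_pb E E1 E' r : Ren E E' r -> Ren E1 (pb r E1) r.
Proof.
  intros [Hi [Ha Hr]]; split; [|split]; auto.
  - intros n; apply pb_at; auto.
  - intros m H. destruct (classic (exists n, r n = m)) as [Hn|Hn]; auto.
    rewrite pb_out in H; auto; congruence.
Qed.

Lemma ren_step : forall E t, derivF derivable E t -> forall E' r, Ren E E' r ->
  derivF (fun E' t' => exists E t r, derivable E t /\ Ren E E' r /\ t' = rename r t) E'
         (rename r t).
Proof.
  intros E t H; induction H; intros E' r HR.
  - rewrite rename_var. destruct HR as [Hi [Ha Hr]]. apply d_vl.
    + rewrite Ha; auto.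
    + intros y Hy HE. destruct (Hr y) as [n Hn]; [congruence|]. subst.
      rewrite Ha in HE. destruct (Nat.eq_dec n x); subst; [tauto|].
      apply (H0 n); auto.
  - rewrite rename_var. apply d_vi. destruct HR as [Hi [Ha Hr]]; rewrite Ha; auto.
    eapply ren_nolin; eauto.
  - rewrite rename_var. apply d_vc. destruct HR as [Hi [Ha Hr]]; rewrite Ha; auto.
    eapply ren_nolin; eauto.
  - rewrite rename_app. apply d_a with (pb r G1) (pb r G2).
    + eapply ren_split; eauto.
    + apply IHderivF1. eapply ren_pb; eauto.
    + apply IHderivF2. eapply ren_pb; eauto.
  - rewrite rename_lam. apply d_ll. apply IHderivF. apply ren_ext; auto.
  - rewrite rename_lamI. apply d_li. apply IHderivF. apply ren_ext; auto.
  - rewrite rename_lamC. apply d_lc. apply IHderivF. apply ren_ext; auto.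
  - rewrite rename_boxI. apply d_mi. eapply ren_nolin; eauto. auto.
  - rewrite rename_boxC. apply d_mc. eapply ren_nolin; eauto. eauto 6.
Qed.

Lemma der_ren E E' r t : derivable E t -> Ren E E' r -> derivable E' (rename r t).
Proof.
  intros H HR.
  apply coind with
    (X := fun E' t' => exists E t r, derivable E t /\ Ren E E' r /\ t' = rename r t).
  - intros E0 t0 [E1 [t1 [r1 [Hd [HR1 ->]]]]]. eapply ren_step; eauto.
    apply der_unfold; auto.
  - eauto 6.
Qed.

Definition shift (E : env) : env := fun n => match n with 0 => None | S m => E m end.

Lemma ren_shift E : Ren E (shift E) S.
Proof.
  split; [|split].
  - intros a b H; injection H; auto.
  - intros n; reflexivity.
  - intros [|m] H; simpl in H; [congruence|]. eauto.
Qed.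

Definition kind_eq (a b : kind) : {a = b} + {a <> b}.
Proof. decide equality. Defined.

Lemma subst_var s x : subst s (Var x) = s x.
Proof. rewrite (frob_eq (subst s (Var x))). simpl. destruct (s x); reflexivity. Qed.
Lemma subst_app s M N : subst s (App M N) = App (subst s M) (subst s N).
Proof. rewrite (frob_eq (subst s (App M N))). reflexivity. Qed.
Lemma subst_lam s M : subst s (Lam M) = Lam (subst (up s) M).
Proof. rewrite (frob_eq (subst s (Lam M))). reflexivity. Qed.
Lemma subst_lamI s M : subst s (LamI M) = LamI (subst (up s) M).
Proof. rewrite (frob_eq (subst s (LamI M))). reflexivity. Qed.
Lemma subst_lamC s M : subst s (LamC M) = LamC (subst (up s) M).
Proof. rewrite (frob_eq (subst s (LamC M))). reflexivity. Qed.
Lemma subst_boxI s M : subst s (BoxI M) = BoxI (subst s M).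
Proof. rewrite (frob_eq (subst s (BoxI M))). reflexivity. Qed.
Lemma subst_boxC s M : subst s (BoxC M) = BoxC (subst s M).
Proof. rewrite (frob_eq (subst s (BoxC M))). reflexivity. Qed.

Definition STF (D : env) (s : nat -> term) (G : env) (F : nat -> env) :=
  (forall y k, G y = Some k -> derivable (F y) (s y)) /\
  (forall y k z k', G y = Some k -> F y z = Some k' -> D z = Some k') /\
  (forall y k z, G y = Some k -> k <> KL -> F y z <> Some KL) /\
  (forall z, D z = Some KL -> exists y, G y = Some KL /\ F y z = Some KL) /\
  (forall y y' z, G y = Some KL -> G y' = Some KL -> F y z = Some KL ->
     F y' z = Some KL -> y = y').

Definition ST D s G := exists F, STF D s G F.

Definition dsplit1 (D G1 : env) (F : nat -> env) : env :=
  fun z => match D z with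
           | Some KL => match excluded_middle_informative
                          (exists y, G1 y = Some KL /\ F y z = Some KL) with
                        | left _ => Some KL | right _ => None end
           | o => o end.

Definition dsplit2 (D G1 : env) (F : nat -> env) : env :=
  fun z => match D z with
           | Some KL => match dsplit1 D G1 F z with Some _ => None | None => Some KL end
           | o => o end.

Lemma dsplit1_KL D G1 F z : D z = Some KL ->
  (dsplit1 D G1 F z = Some KL <-> exists y, G1 y = Some KL /\ F y z = Some KL).
Proof.
  intros HD. unfold dsplit1. rewrite HD.
  destruct (excluded_middle_informative _) as [H|H]; split; intros; auto; try tauto; discriminate.
Qed.

Lemma dsplit1_nKL D G1 F z k : D z = Some k -> k <> KL -> dsplit1 D G1 F z = Some k.
Proof. intros HD Hk. unfold dsplit1. rewrite HD. destruct k; congruence. Qed.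
Lemma dsplit2_nKL D G1 F z k : D z = Some k -> k <> KL -> dsplit2 D G1 F z = Some k.
Proof. intros HD Hk. unfold dsplit2. rewrite HD. destruct k; congruence. Qed.

Lemma dsplit1_inv D G1 F z k : dsplit1 D G1 F z = Some k -> D z = Some k.
Proof.
  unfold dsplit1. destruct (D z) as [[| |]|]; auto.
  destruct (excluded_middle_informative _); congruence.
Qed.
Lemma dsplit2_inv D G1 F z k : dsplit2 D G1 F z = Some k -> D z = Some k.
Proof.
  unfold dsplit2. destruct (D z) as [[| |]|]; auto.
  destruct (dsplit1 D G1 F z); congruence.
Qed.

Lemma dsplit_split D G1 F : env_split D (dsplit1 D G1 F) (dsplit2 D G1 F).
Proof.
  intros z. unfold dsplit2, dsplit1. destruct (D z) as [[| |]|]; auto.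
  destruct (excluded_middle_informative _); auto.
Qed.

Lemma STF_split D s G G1 G2 F : STF D s G F -> env_split G G1 G2 ->
  STF (dsplit1 D G1 F) s G1 F /\ STF (dsplit2 D G1 F) s G2 F.
Proof.
  intros [H1 [H2 [H3 [H4 H5]]]] Hs. split.
  - split; [|split; [|split; [|split]]].
    + intros y k Hy. eapply H1. eapply split_sub1; eauto.
    + intros y k z k' Hy Hz. assert (HG := split_sub1 _ _ _ _ _ Hs Hy).
      assert (HD := H2 _ _ _ _ HG Hz).
      destruct (kind_eq k' KL) as [->|Hk'].
      * apply dsplit1_KL; auto. exists y. split; auto.
        destruct (kind_eq k KL) as [->|Hk]; auto. exfalso; exact (H3 _ _ _ HG Hk Hz).
      * apply dsplit1_nKL; auto.
    + intros y k z Hy. eapply H3. eapply split_sub1; eauto.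
    + intros z Hz. assert (HD := dsplit1_inv _ _ _ _ _ Hz). apply dsplit1_KL in Hz; auto.
    + intros y y' z Hy Hy'. apply H5; eapply split_sub1; eauto.
  - split; [|split; [|split; [|split]]].
    + intros y k Hy. eapply H1. eapply split_sub2; eauto.
    + intros y k z k' Hy Hz. assert (HG := split_sub2 _ _ _ _ _ Hs Hy).
      assert (HD := H2 _ _ _ _ HG Hz).
      destruct (kind_eq k' KL) as [->|Hk'].
      * assert (k = KL) as ->.
        { destruct (kind_eq k KL) as [->|Hk]; auto. exfalso; exact (H3 _ _ _ HG Hk Hz). }
        unfold dsplit2. rewrite HD.
        destruct (dsplit1 D G1 F z) as [k1|] eqn:E1; auto.
        assert (Hk1 := dsplit1_inv _ _ _ _ _ E1). rewrite HD in Hk1. injection Hk1; intros; subst.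
        apply dsplit1_KL in E1; auto. destruct E1 as [y' [Hy1 Hz1]].
        assert (y' = y) by (eapply H5; eauto; eapply split_sub1; eauto). subst.
        exfalso; eapply split_disj; eauto.
      * apply dsplit2_nKL; auto.
    + intros y k z Hy. eapply H3. eapply split_sub2; eauto.
    + intros z Hz. assert (HD := dsplit2_inv _ _ _ _ _ Hz).
      destruct (H4 z HD) as [y [Hy Hyz]]. exists y; split; auto.
      destruct (split_lin _ _ _ _ Hs Hy) as [Hy1|Hy2]; auto.
      exfalso. unfold dsplit2 in Hz. rewrite HD in Hz.
      assert (dsplit1 D G1 F z = Some KL) as E by (apply dsplit1_KL; eauto).
      rewrite E in Hz; discriminate.
    + intros y y' z Hy Hy'. apply H5; eapply split_sub2; eauto.
Qed.

Definition single (x : nat) (k : option kind) : env :=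
  fun z => if Nat.eqb z x then k else None.

Lemma single_some x k z k' : single x k z = Some k' -> z = x /\ k = Some k'.
Proof.
  unfold single. destruct (Nat.eqb z x) eqn:E; [|discriminate].
  apply Nat.eqb_eq in E; auto.
Qed.

Lemma der_single x k : derivable (single x (Some k)) (Var x).
Proof.
  apply der_fold.
  assert (Hx : single x (Some k) x = Some k) by (unfold single; rewrite Nat.eqb_refl; auto).
  assert (Ho : forall y, y <> x -> single x (Some k) y = None).
  { intros y Hy. unfold single. destruct (Nat.eqb y x) eqn:E; auto.
    apply Nat.eqb_eq in E; congruence. }
  destruct k.
  - apply d_vl; auto. intros y Hy; rewrite Ho; auto; discriminate.
  - apply d_vi; auto. intros y; destruct (Nat.eq_dec y x); subst; [rewrite Hx|rewrite Ho]; auto; discriminate.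
  - apply d_vc; auto. intros y; destruct (Nat.eq_dec y x); subst; [rewrite Hx|rewrite Ho]; auto; discriminate.
Qed.

Lemma ST_up k D s G : ST D s G -> ST (ext k D) (up s) (ext k G).
Proof.
  intros [F [H1 [H2 [H3 [H4 H5]]]]].
  exists (fun y => match y with 0 => single 0 (Some k) | S y' => shift (F y') end).
  split; [|split; [|split; [|split]]].
  - intros [|y] k0 Hy; simpl in *.
    + apply der_single.
    + eapply der_ren. eapply H1; eauto. apply ren_shift.
  - intros [|y] k0 z k' Hy Hz; simpl in *.
    + apply single_some in Hz. destruct Hz as [-> Hk]. simpl. congruence.
    + destruct z as [|z]; simpl in *; [discriminate|]. eauto.
  - intros [|y] k0 z Hy Hk; simpl in *.
    + intros Hz. apply single_some in Hz. destruct Hz as [_ Hz]. congruence.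
    + destruct z as [|z]; simpl; [discriminate|]. eauto.
  - intros [|z] Hz; simpl in *.
    + exists 0. simpl. split; auto.
    + destruct (H4 z Hz) as [y [Hy Hyz]]. exists (S y); simpl; auto.
  - intros [|y] [|y'] z Hy Hy' Hz Hz'; simpl in *; auto.
    + apply single_some in Hz. destruct Hz as [-> _]. simpl in Hz'. discriminate.
    + apply single_some in Hz'. destruct Hz' as [-> _]. simpl in Hz. discriminate.
    + destruct z as [|z]; simpl in *; [discriminate|]. f_equal; eauto.
Qed.

Lemma STF_nolin D s G F : STF D s G F -> no_linear G -> no_linear D.
Proof.
  intros [H1 [H2 [H3 [H4 H5]]]] Hn z Hz. destruct (H4 z Hz) as [y [Hy _]].
  exact (Hn y Hy).
Qed.

Definition SX (D : env) (t' : term) : Prop :=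
  derivable D t' \/ exists G t s, derivable G t /\ ST D s G /\ t' = subst s t.

Lemma subst_var_case D s G F x k : STF D s G F -> G x = Some k ->
  (forall z, D z = Some KL -> F x z = Some KL) -> derivF SX D (s x).
Proof.
  intros HF Hx Hl. destruct HF as [H1 [H2 [H3 [H4 H5]]]].
  apply (derivF_mono derivable). intros; left; auto.
  apply der_unfold. eapply der_wk. eapply H1; eauto.
  split; eauto.
Qed.

Lemma subst_step : forall G t, derivF derivable G t -> forall D s, ST D s G ->
  derivF SX D (subst s t).
Proof.
  intros G t H; induction H; intros D s [F HF].
  - rewrite subst_var. eapply subst_var_case; eauto.
    intros z Hz. destruct HF as [H1 [H2 [H3 [H4 H5]]]].
    destruct (H4 z Hz) as [y [Hy Hyz]].
    destruct (Nat.eq_dec y x); subst; auto. exfalso; eapply H0; eauto.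
  - rewrite subst_var. eapply subst_var_case; eauto.
    intros z Hz. exfalso. eapply STF_nolin; eauto.
  - rewrite subst_var. eapply subst_var_case; eauto.
    intros z Hz. exfalso. eapply STF_nolin; eauto.
  - rewrite subst_app. destruct (STF_split _ _ _ _ _ _ HF H) as [HF1 HF2].
    apply d_a with (dsplit1 D G1 F) (dsplit2 D G1 F).
    + apply dsplit_split.
    + apply IHderivF1. exists F; auto.
    + apply IHderivF2. exists F; auto.
  - rewrite subst_lam. apply d_ll. apply IHderivF. apply ST_up. exists F; auto.
  - rewrite subst_lamI. apply d_li. apply IHderivF. apply ST_up. exists F; auto.
  - rewrite subst_lamC. apply d_lc. apply IHderivF. apply ST_up. exists F; auto.
  - rewrite subst_boxI. apply d_mi. eapply STF_nolin; eauto. apply IHderivF. exists F; auto.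
  - rewrite subst_boxC. apply d_mc. eapply STF_nolin; eauto.
    right. exists G, M, s. split; auto. split; auto. exists F; auto.
Qed.

Lemma der_subst G D s t : derivable G t -> ST D s G -> derivable D (subst s t).
Proof.
  intros H HS. apply coind with (X := SX).
  - intros D0 t0 [Hd|[G0 [t1 [s0 [Hd [HS0 ->]]]]]].
    + apply (derivF_mono derivable). intros; left; auto. apply der_unfold; auto.
    + eapply subst_step; eauto. apply der_unfold; auto.
  - right. eauto 6.
Qed.

Lemma ST_s0 k G G1 G2 N : env_split G G1 G2 -> derivable G2 N ->
  (k = KL \/ no_linear G2) ->
  ST G (fun n => match n with 0 => N | S k => Var k end) (ext k G1).
Proof.
  intros Hs HN Hk.
  exists (fun y => match y with 0 => G2 | S y' => single y' (G1 y') end).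
  split; [|split; [|split; [|split]]].
  - intros [|y] k0 Hy; simpl in *; auto. rewrite Hy. apply der_single.
  - intros [|y] k0 z k' Hy Hz; simpl in *.
    + eapply split_sub2; eauto.
    + apply single_some in Hz. destruct Hz as [-> Hz]. eapply split_sub1; eauto.
  - intros [|y] k0 z Hy Hk0; simpl in *.
    + injection Hy; intros; subst. destruct Hk as [->|Hn]; [congruence|]. apply Hn.
    + intros Hz. apply single_some in Hz. destruct Hz as [-> Hz]. congruence.
  - intros z Hz. destruct (split_lin _ _ _ _ Hs Hz) as [H1|H2].
    + exists (S z). simpl. split; auto. unfold single; rewrite Nat.eqb_refl; auto.
    + exists 0. simpl. split; auto. destruct Hk as [->|Hn]; auto. exfalso; eapply Hn; eauto.
  - intros [|y] [|y'] z Hy Hy' Hz Hz'; simpl in *; auto.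
    + apply single_some in Hz'. destruct Hz' as [-> Hz']. exfalso; eapply split_disj; eauto.
    + apply single_some in Hz. destruct Hz as [-> Hz0]. exfalso; eapply split_disj; eauto.
    + apply single_some in Hz. apply single_some in Hz'. destruct Hz, Hz'. subst; auto.
Qed.

Lemma inv_app X G M N : derivF X G (App M N) ->
  exists G1 G2, env_split G G1 G2 /\ derivF X G1 M /\ derivF X G2 N.
Proof. intros H; inversion H; subst; eauto 6. Qed.
Lemma inv_lam X G M : derivF X G (Lam M) -> derivF X (ext KL G) M.
Proof. intros H; inversion H; subst; auto. Qed.
Lemma inv_lamI X G M : derivF X G (LamI M) -> derivF X (ext KI G) M.
Proof. intros H; inversion H; subst; auto. Qed.
Lemma inv_lamC X G M : derivF X G (LamC M) -> derivF X (ext KC G) M.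
Proof. intros H; inversion H; subst; auto. Qed.
Lemma inv_boxI X G M : derivF X G (BoxI M) -> no_linear G /\ derivF X G M.
Proof. intros H; inversion H; subst; auto. Qed.
Lemma inv_boxC X G M : derivF X G (BoxC M) -> no_linear G /\ X G M.
Proof. intros H; inversion H; subst; auto. Qed.

Lemma red_ctx M N : ctx_red M N -> forall G, derivable G M -> derivable G N.
Proof.
  induction 1; intros G HD; apply der_unfold in HD.
  - destruct H as [M N|M N|M N]; apply inv_app in HD;
      destruct HD as [G1 [G2 [Hs [HM HN]]]].
    + apply inv_lam in HM. unfold subst0. eapply der_subst. apply der_fold; eauto.
      eapply ST_s0; eauto. apply der_fold; auto.
    + apply inv_lamI in HM. apply inv_boxI in HN. destruct HN as [Hn HN].
      unfold subst0. eapply der_subst. apply der_fold; eauto.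
      eapply ST_s0; eauto. apply der_fold; auto.
    + apply inv_lamC in HM. apply inv_boxC in HN. destruct HN as [Hn HN].
      unfold subst0. eapply der_subst. apply der_fold; eauto.
      eapply ST_s0; eauto.
  - apply inv_app in HD. destruct HD as [G1 [G2 [Hs [HM HN]]]].
    apply der_fold. eapply d_a; eauto. apply der_unfold. apply IHctx_red. apply der_fold; auto.
  - apply inv_app in HD. destruct HD as [G1 [G2 [Hs [HM HN]]]].
    apply der_fold. eapply d_a; eauto. apply der_unfold. apply IHctx_red. apply der_fold; auto.
  - apply inv_lam in HD. apply der_fold. apply d_ll. apply der_unfold. apply IHctx_red. apply der_fold; auto.
  - apply inv_lamI in HD. apply der_fold. apply d_li. apply der_unfold. apply IHctx_red. apply der_fold; auto.
  - apply inv_lamC in HD. apply der_fold. apply d_lc. apply der_unfold. apply IHctx_red. apply der_fold; auto.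
  - apply inv_boxI in HD. destruct HD as [Hn HD].
    apply der_fold. apply d_mi; auto. apply der_unfold. apply IHctx_red. apply der_fold; auto.
  - apply inv_boxC in HD. destruct HD as [Hn HD].
    apply der_fold. apply d_mc; auto.
Qed.

Theorem mainTheorem4 (G : env) (M N : term) :
  finite_env G -> derivable G M -> red M N -> derivable G N.
Proof.
  intros _ HD [N' [Hc Hb]]. eapply der_bisim; [eapply red_ctx; eauto | exact Hb].
Qed.
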